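(* Let $M$ be a totally ordered finite monoid and $a,b,c\in M$ with $b\le_J a$. If $abc=ab$ then $bc=b$. Similarly, if $cba=ba$ then $cb=b$.
   Context: For $m$ in a monoid $M$, $J(m)=\{xmy:x,y\in M\}$. Write $a\le_J b$ iff $J(a)\subseteq J(b)$. A monoid $M$ is totally ordered if for all $a,b\in M$, $J(ab)=J(a)$ or $J(ab)=J(b)$. *)

(* Defs.v *)
From HB Require Import structures.
From mathcomp Require Import all_boot.
Set Implicit Arguments. Unset Strict Implicit. Unset Printing Implicit Defensive.
Local Open Scope group_scope.

Definition Jideal (M : monoidType) (m : M) : M -> Prop :=
  fun z => exists x y : M, z = x * m * y.

Definition leJ (M : monoidType) (a b : M) : Prop :=
  forall z, Jideal a z -> Jideal b z.

Definition Jeq (M : monoidType) (u v : M) : Prop :=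
  forall z, Jideal u z <-> Jideal v z.

Definition totally_ordered (M : monoidType) : Prop :=
  forall a b : M, Jeq (a * b) a \/ Jeq (a * b) b.

Definition finite_monoid (M : monoidType) : Prop :=
  exists s : seq M, forall x : M, x \in s.

(* Main.v *)
Require Import Defs.
From HB Require Import structures.
From mathcomp Require Import all_boot.
Local Open Scope group_scope.

Section Aux.
Variable M : monoidType.

Lemma pig (HF : finite_monoid M) (z : M) :
  exists i j, (i < j)%N /\ z ^+ i = z ^+ j.
Proof.
case: HF => s Hs.
set l := [seq z ^+ n | n <- iota 0 (size s).+1].
have : ~~ uniq l.
  apply/negP => U.
  have := uniq_leq_size U (fun x _ => Hs x).
  by rewrite /l size_map size_iota ltnn.
case/(uniqPn 1) => i [j [ij jl E]].
move: jl E; rewrite /l size_map size_iota => jl.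
rewrite !(nth_map 0%N) ?size_iota ?(ltn_trans ij) // !nth_iota ?(ltn_trans ij) //.
by rewrite !add0n => E; exists i, j.
Qed.

Lemma idem (HF : finite_monoid M) (z : M) :
  exists N, (0 < N)%N /\ z ^+ N * z ^+ N = z ^+ N.
Proof.
have [i [j [ij E]]] := pig HF z.
set d := (j - i)%N.
have dpos : (0 < d)%N by rewrite subn_gt0.
have Ei : z ^+ (i + d) = z ^+ i by rewrite subnKC ?(ltnW ij).
have Em : forall m, z ^+ (i + d * m) = z ^+ i.
  elim=> [|m IH]; first by rewrite muln0 addn0.
  by rewrite mulnS addnCA expgnDr IH -expgnDr addnC Ei.
exists (d * i.+1)%N; split; first by rewrite muln_gt0 dpos.
have iN : (i <= d * i.+1)%N.
  by apply: leq_trans (leqnSn i) _; rewrite leq_pmull.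
rewrite -expgnDr -{1}(subnK iN) -addnA expgnDr [(i + _)%N]addnC.
by rewrite [(d * i.+1 + i)%N]addnC Em -expgnDr subnK.
Qed.

Lemma stabL (HF : finite_monoid M) (x y s p q : M) :
  x = s * y -> y = p * x * q -> exists t, y = t * x.
Proof.
move=> Hx Hy.
have Hn : forall n, y = (p * s) ^+ n * y * q ^+ n.
  elim=> [|n IH]; first by rewrite !expg0 mul1g mulg1.
  have H1 : y = p * s * y * q by rewrite {1}Hy Hx !mulgA.
  by rewrite {1}IH {1}H1 expgSr expgS !mulgA.
have [N [Npos Id]] := idem HF q.
case: N Npos Id => // N _ Id.
have Hyq : y * q ^+ N.+1 = y by rewrite {1}(Hn N.+1) -mulgA Id -(Hn N.+1).
have Hy2 : y = (p * s) ^+ N.+1 * y by rewrite {1}(Hn N.+1) -mulgA Hyq.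
exists ((p * s) ^+ N * p).
by rewrite {1}Hy2 expgSr Hx -!mulgA.
Qed.

Lemma stabR (HF : finite_monoid M) (x y s p q : M) :
  x = y * s -> y = p * x * q -> exists t, y = x * t.
Proof.
move=> Hx Hy.
have Hn : forall n, y = p ^+ n * y * (s * q) ^+ n.
  elim=> [|n IH]; first by rewrite !expg0 mul1g mulg1.
  have H1 : y = p * y * (s * q) by rewrite {1}Hy Hx !mulgA.
  by rewrite {1}IH {1}H1 expgSr expgS !mulgA.
have [N [Npos Id]] := idem HF p.
case: N Npos Id => // N _ Id.
have Hpy : p ^+ N.+1 * y = y by rewrite {1}(Hn N.+1) !mulgA Id -(Hn N.+1).
have Hy2 : y = y * (s * q) ^+ N.+1 by rewrite {1}(Hn N.+1) Hpy.
exists (q * (s * q) ^+ N).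
by rewrite {1}Hy2 expgS Hx -!mulgA.
Qed.
End Aux.

Theorem lemma4p2 (M : monoidType) (HF : finite_monoid M)
  (HT : totally_ordered M) (a b c : M) (hba : leJ b a) :
  (a * b * c = a * b -> b * c = b) /\ (c * b * a = b * a -> c * b = b).
Proof.
have Jbb : Jideal b b by exists 1, 1; rewrite mul1g mulg1.
have Jab : Jideal a b by apply: hba.
split=> E.
- have [p [q Hb]] : Jideal (a * b) b.
    by case: (HT a b) => H; apply/H.
  have [t Ht] := @stabL _ HF (a * b) b a p q (erefl _) Hb.
  by rewrite Ht -mulgA E.
- have [p [q Hb]] : Jideal (b * a) b.
    by case: (HT b a) => H; apply/H.
  have [t Ht] := @stabR _ HF (b * a) b a p q (erefl _) Hb.
  by rewrite {1}Ht !mulgA E -Ht.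
Qed.
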